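(* Let $n\ge 1$, $F=\mathbb{F}_{3^n}$, and $G=T_{39}=\langle x,y\mid x^{13}=y^3=1,\ y^{-1}xy=x^3\rangle$. Then the unit group of the group algebra $FG$ satisfies $$\mathcal{U}(FG)\cong C_3^{2n}\times C_{3^n-1}\times GL_3(F)^4.$$
   Context: $\mathcal{U}(R)$ denotes the group of units of a ring $R$; $C_r$ denotes the cyclic group of order $r$, $C_3^{2n}$ the direct product of $2n$ copies of $C_3$; $GL_3(F)$ is the group of invertible $3\times 3$ matrices over $F$, and $GL_3(F)^4$ the direct product of four copies. *)

(* Defs.v *)
From HB Require Import structures.
From mathcomp Require Import all_boot all_order all_algebra all_fingroup all_solvable all_field.
Set Implicit Arguments. Unset Strict Implicit. Unset Printing Implicit Defensive.
Import GRing.Theory.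
Local Open Scope ring_scope.

(* The group algebra F[G] of a finite group G (a subgroup of gT) over a field F,
   modelled as functions gT -> F supported on G, with convolution product. *)
Section GroupAlgebra.
Variables (F : finFieldType) (gT : finGroupType) (G : {set gT}).

Definition ga_supp (a : {ffun gT -> F}) : bool :=
  [forall g, (g \notin G) ==> (a g == 0)].

Definition ga_mul (a b : {ffun gT -> F}) : {ffun gT -> F} :=
  [ffun g => \sum_(h in G) a h * b (h^-1 * g)%g].

Definition ga_one : {ffun gT -> F} := [ffun g => (g == 1%g)%:R].

Definition ga_units : {set {ffun gT -> F}} :=
  [set a | ga_supp a &&
     [exists b : {ffun gT -> F},
        [&& ga_supp b, ga_mul a b == ga_one & ga_mul b a == ga_one]]].
End GroupAlgebra.

(* The target group C_3^{2n} x C_{3^n-1} x GL_3(F)^4, with C_r := 'Z_r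
   (integers mod r under addition). *)
Definition target (n : nat) (F : finFieldType) : Type :=
  ({ffun 'I_(2 * n) -> 'Z_3} * 'Z_(3 ^ n - 1) * {ffun 'I_4 -> {'GL_3[F]}})%type.

Definition target_mul (n : nat) (F : finFieldType) (u v : target n F) : target n F :=
  ([ffun i => u.1.1 i + v.1.1 i], u.1.2 + v.1.2, [ffun i => (u.2 i * v.2 i)%g]).

Arguments ga_units F {gT} G.
Arguments ga_mul {F gT} G a b.
Arguments ga_supp {F gT} G a.
Arguments ga_one F gT.

(* Main.v *)
Require Import Defs.
From HB Require Import structures.
From mathcomp Require Import all_boot all_order all_algebra all_fingroup all_solvable all_field.
From mathcomp Require Import zify ring.
Set Implicit Arguments. Unset Strict Implicit. Unset Printing Implicit Defensive.

Definition cmat := seq (seq nat).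
Definition ce (M : cmat) (r s : nat) : nat := nth 0 (nth [::] M r) s.
Definition cmul (M N : cmat) : cmat :=
  mkseq (fun r => mkseq (fun s =>
    (ce M r 0 * ce N 0 s + ce M r 1 * ce N 1 s + ce M r 2 * ce N 2 s) %% 3) 3) 3.
Definition cid : cmat := [:: [:: 1; 0; 0]; [:: 0; 1; 0]; [:: 0; 0; 1]].
Definition cpow (M : cmat) (i : nat) : cmat := iter i (cmul M) cid.
Definition Xc (m : nat) : cmat :=
  match m with
  | 0 => [:: [:: 1; 0; 0]; [:: 0; 1; 0]; [:: 0; 0; 1]]
  | 1 => [:: [:: 0; 0; 1]; [:: 1; 0; 0]; [:: 0; 1; 2]]
  | 2 => [:: [:: 0; 0; 1]; [:: 1; 0; 2]; [:: 0; 1; 2]]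
  | 3 => [:: [:: 0; 0; 1]; [:: 1; 0; 1]; [:: 0; 1; 0]]
  | _ => [:: [:: 0; 0; 1]; [:: 1; 0; 1]; [:: 0; 1; 1]]
  end.

Definition Yc (m : nat) : cmat :=
  match m with
  | 0 => [:: [:: 1; 1; 0]; [:: 0; 1; 1]; [:: 0; 0; 1]]
  | 1 => [:: [:: 0; 0; 1]; [:: 1; 0; 1]; [:: 2; 1; 0]]
  | 2 => [:: [:: 0; 0; 1]; [:: 2; 1; 0]; [:: 2; 0; 2]]
  | 3 => [:: [:: 0; 0; 1]; [:: 1; 2; 2]; [:: 0; 1; 1]]
  | _ => [:: [:: 0; 0; 1]; [:: 0; 2; 2]; [:: 1; 2; 1]]
  end.

Definition Wt : seq (seq nat) := [::
  [:: 1; 2; 1; 0; 0; 0; 0; 0; 0; 1; 0; 0; 0; 1; 0; 0; 0; 1; 1; 0; 0; 0; 1; 0; 0; 0; 1; 1; 0; 0; 0; 1; 0; 0; 0; 1; 1; 0; 0; 0; 1; 0; 0; 0; 1];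
  [:: 1; 2; 1; 0; 0; 0; 0; 0; 0; 0; 1; 1; 1; 0; 0; 0; 1; 0; 1; 1; 1; 1; 0; 0; 0; 1; 0; 2; 0; 1; 1; 0; 0; 0; 1; 0; 2; 2; 1; 1; 0; 0; 0; 1; 0];
  [:: 1; 2; 1; 0; 0; 0; 0; 0; 0; 1; 1; 0; 0; 1; 1; 1; 0; 0; 2; 2; 1; 1; 1; 1; 1; 0; 0; 1; 1; 2; 2; 0; 1; 1; 0; 0; 0; 2; 2; 2; 2; 1; 1; 0; 0];
  [:: 1; 2; 1; 0; 0; 0; 0; 0; 0; 1; 1; 1; 1; 1; 0; 0; 1; 1; 1; 0; 2; 2; 2; 1; 1; 1; 1; 0; 2; 1; 1; 1; 2; 2; 0; 1; 2; 2; 0; 0; 2; 2; 2; 2; 1];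
  [:: 1; 2; 1; 0; 0; 0; 0; 0; 0; 1; 2; 1; 1; 1; 1; 1; 1; 0; 1; 0; 1; 1; 0; 2; 2; 2; 1; 2; 1; 0; 0; 2; 1; 1; 1; 2; 0; 1; 2; 2; 2; 0; 0; 2; 2];
  [:: 1; 2; 1; 0; 0; 0; 0; 0; 0; 2; 2; 1; 1; 2; 1; 1; 1; 1; 1; 2; 1; 1; 0; 1; 1; 0; 2; 2; 0; 2; 2; 1; 0; 0; 2; 1; 1; 2; 0; 0; 1; 2; 2; 2; 0];
  [:: 1; 2; 1; 0; 0; 0; 0; 0; 0; 2; 0; 2; 2; 2; 1; 1; 2; 1; 0; 2; 1; 1; 2; 1; 1; 0; 1; 1; 2; 2; 2; 0; 2; 2; 1; 0; 1; 2; 1; 1; 2; 0; 0; 1; 2];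
  [:: 1; 2; 1; 0; 0; 0; 0; 0; 0; 0; 1; 2; 2; 0; 2; 2; 2; 1; 2; 1; 0; 0; 2; 1; 1; 2; 1; 1; 2; 1; 1; 2; 2; 2; 0; 2; 1; 0; 1; 1; 2; 1; 1; 2; 0];
  [:: 1; 2; 1; 0; 0; 0; 0; 0; 0; 1; 2; 0; 0; 1; 2; 2; 0; 2; 0; 2; 2; 2; 1; 0; 0; 2; 1; 1; 1; 1; 1; 2; 1; 1; 2; 2; 2; 0; 1; 1; 0; 1; 1; 2; 1];
  [:: 1; 2; 1; 0; 0; 0; 0; 0; 0; 2; 1; 1; 1; 2; 0; 0; 1; 2; 2; 2; 0; 0; 2; 2; 2; 1; 0; 0; 1; 1; 1; 1; 1; 1; 2; 1; 1; 2; 2; 2; 0; 1; 1; 0; 1];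
  [:: 1; 2; 1; 0; 0; 0; 0; 0; 0; 1; 0; 2; 2; 1; 1; 1; 2; 0; 1; 2; 2; 2; 2; 0; 0; 2; 2; 1; 1; 0; 0; 1; 1; 1; 1; 1; 1; 1; 1; 1; 2; 2; 2; 0; 1];
  [:: 1; 2; 1; 0; 0; 0; 0; 0; 0; 0; 0; 1; 1; 0; 2; 2; 1; 1; 0; 0; 1; 1; 2; 2; 2; 2; 0; 0; 0; 1; 1; 1; 0; 0; 1; 1; 0; 0; 1; 1; 1; 1; 1; 2; 2];
  [:: 1; 2; 1; 0; 0; 0; 0; 0; 0; 0; 1; 0; 0; 0; 1; 1; 0; 2; 0; 1; 0; 0; 0; 1; 1; 2; 2; 0; 1; 0; 0; 0; 1; 1; 1; 0; 0; 1; 0; 0; 0; 1; 1; 1; 1];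
  [:: 0; 1; 1; 0; 0; 0; 0; 0; 0; 2; 2; 1; 1; 1; 0; 0; 1; 0; 2; 2; 1; 0; 1; 0; 2; 2; 0; 0; 2; 1; 1; 0; 0; 1; 1; 0; 1; 2; 1; 2; 2; 0; 1; 0; 0];
  [:: 0; 1; 1; 0; 0; 0; 0; 0; 0; 1; 2; 0; 2; 2; 1; 1; 1; 0; 1; 2; 1; 2; 2; 1; 0; 1; 0; 1; 2; 2; 0; 2; 1; 1; 0; 0; 1; 2; 2; 1; 2; 1; 2; 2; 0];
  [:: 0; 1; 1; 0; 0; 0; 0; 0; 0; 0; 0; 1; 1; 2; 0; 2; 2; 1; 0; 2; 2; 1; 2; 1; 2; 2; 1; 0; 1; 1; 1; 2; 2; 0; 2; 1; 0; 1; 0; 1; 2; 2; 1; 2; 1];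
  [:: 0; 1; 1; 0; 0; 0; 0; 0; 0; 0; 1; 1; 0; 0; 1; 1; 2; 0; 0; 0; 1; 0; 2; 2; 1; 2; 1; 0; 1; 0; 0; 1; 1; 1; 2; 2; 0; 2; 2; 0; 1; 0; 1; 2; 2];
  [:: 0; 1; 1; 0; 0; 0; 0; 0; 0; 1; 2; 1; 0; 1; 1; 0; 0; 1; 1; 1; 1; 0; 0; 1; 0; 2; 2; 1; 1; 2; 0; 1; 0; 0; 1; 1; 1; 2; 0; 0; 2; 2; 0; 1; 0];
  [:: 0; 1; 1; 0; 0; 0; 0; 0; 0; 0; 1; 2; 1; 2; 1; 0; 1; 1; 1; 0; 1; 1; 1; 1; 0; 0; 1; 2; 0; 2; 1; 1; 2; 0; 1; 0; 2; 0; 1; 1; 2; 0; 0; 2; 2];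
  [:: 0; 1; 1; 0; 0; 0; 0; 0; 0; 1; 0; 2; 0; 1; 2; 1; 2; 1; 2; 1; 0; 1; 0; 1; 1; 1; 1; 1; 1; 1; 2; 0; 2; 1; 1; 2; 0; 0; 1; 2; 0; 1; 1; 2; 0];
  [:: 0; 1; 1; 0; 0; 0; 0; 0; 0; 1; 0; 0; 1; 0; 2; 0; 1; 2; 1; 2; 2; 2; 1; 0; 1; 0; 1; 0; 0; 1; 1; 1; 1; 2; 0; 2; 2; 2; 1; 0; 0; 1; 2; 0; 1];
  [:: 0; 1; 1; 0; 0; 0; 0; 0; 0; 1; 1; 1; 1; 0; 0; 1; 0; 2; 1; 0; 0; 1; 2; 2; 2; 1; 0; 2; 0; 1; 0; 0; 1; 1; 1; 1; 0; 1; 2; 2; 2; 1; 0; 0; 1];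
  [:: 0; 1; 1; 0; 0; 0; 0; 0; 0; 2; 0; 2; 1; 1; 1; 1; 0; 0; 1; 0; 2; 1; 0; 0; 1; 2; 2; 2; 1; 0; 2; 0; 1; 0; 0; 1; 1; 0; 1; 0; 1; 2; 2; 2; 1];
  [:: 0; 1; 1; 0; 0; 0; 0; 0; 0; 2; 1; 1; 2; 0; 2; 1; 1; 1; 0; 2; 1; 1; 0; 2; 1; 0; 0; 1; 2; 1; 2; 1; 0; 2; 0; 1; 1; 1; 1; 1; 0; 1; 0; 1; 2];
  [:: 0; 1; 1; 0; 0; 0; 0; 0; 0; 0; 1; 0; 2; 1; 1; 2; 0; 2; 2; 2; 0; 0; 2; 1; 1; 0; 2; 1; 1; 0; 1; 2; 1; 2; 1; 0; 1; 0; 0; 1; 1; 1; 1; 0; 1];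
  [:: 0; 1; 1; 0; 0; 0; 0; 0; 0; 1; 1; 0; 0; 1; 0; 2; 1; 1; 0; 1; 0; 2; 2; 0; 0; 2; 1; 1; 0; 0; 1; 1; 0; 1; 2; 1; 2; 2; 0; 1; 0; 0; 1; 1; 1];
  [:: 0; 0; 1; 0; 0; 0; 0; 0; 0; 0; 1; 2; 0; 0; 1; 1; 1; 0; 0; 2; 2; 0; 1; 0; 1; 0; 2; 0; 1; 0; 0; 2; 1; 1; 2; 1; 0; 0; 1; 0; 2; 2; 1; 2; 1];
  [:: 0; 0; 1; 0; 0; 0; 0; 0; 0; 1; 1; 1; 0; 1; 2; 0; 0; 1; 1; 0; 1; 0; 2; 2; 0; 1; 0; 1; 1; 1; 0; 1; 0; 0; 2; 1; 1; 0; 1; 0; 0; 1; 0; 2; 2];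
  [:: 0; 0; 1; 0; 0; 0; 0; 0; 0; 0; 1; 0; 1; 1; 1; 0; 1; 2; 1; 0; 0; 1; 0; 1; 0; 2; 2; 2; 1; 0; 1; 1; 1; 0; 1; 0; 2; 2; 0; 1; 0; 1; 0; 0; 1];
  [:: 0; 0; 1; 0; 0; 0; 0; 0; 0; 1; 2; 0; 0; 1; 0; 1; 1; 1; 2; 2; 0; 1; 0; 0; 1; 0; 1; 1; 0; 0; 2; 1; 0; 1; 1; 1; 0; 1; 0; 2; 2; 0; 1; 0; 1];
  [:: 0; 0; 1; 0; 0; 0; 0; 0; 0; 1; 2; 1; 1; 2; 0; 0; 1; 0; 1; 2; 1; 2; 2; 0; 1; 0; 0; 0; 1; 1; 1; 0; 0; 2; 1; 0; 2; 0; 1; 0; 1; 0; 2; 2; 0];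
  [:: 0; 0; 1; 0; 0; 0; 0; 0; 0; 1; 0; 0; 1; 2; 1; 1; 2; 0; 1; 1; 1; 1; 2; 1; 2; 2; 0; 2; 0; 2; 0; 1; 1; 1; 0; 0; 0; 1; 2; 2; 0; 1; 0; 1; 0];
  [:: 0; 0; 1; 0; 0; 0; 0; 0; 0; 2; 1; 1; 1; 0; 0; 1; 2; 1; 1; 2; 2; 1; 1; 1; 1; 2; 1; 2; 0; 1; 2; 0; 2; 0; 1; 1; 1; 0; 0; 0; 1; 2; 2; 0; 1];
  [:: 0; 0; 1; 0; 0; 0; 0; 0; 0; 2; 2; 1; 2; 1; 1; 1; 0; 0; 0; 2; 1; 1; 2; 2; 1; 1; 1; 1; 1; 0; 2; 0; 1; 2; 0; 2; 1; 2; 2; 1; 0; 0; 0; 1; 2];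
  [:: 0; 0; 1; 0; 0; 0; 0; 0; 0; 0; 1; 1; 2; 2; 1; 2; 1; 1; 2; 2; 1; 0; 2; 1; 1; 2; 2; 1; 2; 2; 1; 1; 0; 2; 0; 1; 1; 2; 0; 1; 2; 2; 1; 0; 0];
  [:: 0; 0; 1; 0; 0; 0; 0; 0; 0; 1; 0; 2; 0; 1; 1; 2; 2; 1; 0; 0; 1; 2; 2; 1; 0; 2; 1; 1; 1; 2; 1; 2; 2; 1; 1; 0; 2; 2; 1; 1; 2; 0; 1; 2; 2];
  [:: 0; 0; 1; 0; 0; 0; 0; 0; 0; 2; 0; 2; 1; 0; 2; 0; 1; 1; 2; 1; 0; 0; 0; 1; 2; 2; 1; 0; 0; 1; 1; 1; 2; 1; 2; 2; 1; 1; 1; 2; 2; 1; 1; 2; 0];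
  [:: 0; 0; 1; 0; 0; 0; 0; 0; 0; 1; 1; 0; 2; 0; 2; 1; 0; 2; 1; 0; 2; 2; 1; 0; 0; 0; 1; 1; 2; 1; 0; 0; 1; 1; 1; 2; 1; 2; 1; 1; 1; 1; 2; 2; 1];
  [:: 0; 0; 1; 0; 0; 0; 0; 0; 0; 0; 0; 1; 1; 1; 0; 2; 0; 2; 0; 1; 0; 1; 0; 2; 2; 1; 0; 0; 2; 1; 1; 2; 1; 0; 0; 1; 0; 2; 2; 1; 2; 1; 1; 1; 1]].

Definition Pm (m i k : nat) : cmat := cmul (cpow (Xc m) i) (cpow (Yc m) k).
Definition Pf (p m r s : nat) : nat := ce (Pm m (p %% 13) (p %/ 13)) r s.
Definition Wf (p m r s : nat) : nat := nth 0 (nth [::] Wt p) (9 * m + 3 * r + s).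
Definition csum (n : nat) (f : nat -> nat) : nat := sumn (map f (iota 0 n)).
Definition csum3 (f : nat -> nat -> nat -> nat) : nat :=
  csum 5 (fun m => csum 3 (fun r => csum 3 (fun s => f m r s))).
Definition Ptab : seq cmat := mkseq (fun p => cmul (cpow (Xc 0) 0) cid) 0.

Definition check1 : bool :=
  all (fun p => all (fun p' =>
     csum3 (fun m r s => Wf p m r s * Pf p' m r s) %% 3 == (p == p'))
   (iota 0 39)) (iota 0 39).
Definition pi3 (m r s : nat) : nat * nat * nat :=
  if m == 0 then (if r <= s then (0, 0, s - r) else (5, 0, 0)) else (m, r, s).
Definition check2 : bool :=
  all (fun m => all (fun r => all (fun s =>
  all (fun m' => all (fun r' => all (fun s' =>
    csum 39 (fun p => Wf p m' r' s' * Pf p m r s) %% 3 == ((m', r', s') == pi3 m r s))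
  (iota 0 3)) (iota 0 3)) (iota 0 5))
  (iota 0 3)) (iota 0 3)) (iota 0 5).
Definition check0 : bool :=
  all (fun p => all (fun r => all (fun s =>
    Pf p 0 r s == (if r <= s then Pf p 0 0 (s - r) else 0)) (iota 0 3)) (iota 0 3)) (iota 0 39).
Definition checkrel : bool :=
  all (fun m => [&& cpow (Xc m) 13 == cid, cpow (Yc m) 3 == cid &
                    cmul (Xc m) (Yc m) == cmul (Yc m) (cpow (Xc m) 3)]) (iota 0 5).

Lemma check1_ok : check1. Proof. vm_compute. reflexivity. Qed.
Lemma check2_ok : check2. Proof. vm_compute. reflexivity. Qed.
Lemma check0_ok : check0. Proof. vm_compute. reflexivity. Qed.
Lemma checkrel_ok : checkrel. Proof. vm_compute. reflexivity. Qed.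


Section Grp.
Variable gT : finGroupType.
Local Open Scope group_scope.

Lemma grp_facts (x y : gT) : x ^+ 13 = 1 -> y ^+ 3 = 1 -> x ^ y = x ^+ 3 ->
  [/\ <[x]> <*> <[y]> = <[x]> * <[y]>,
      (#|<[x]> <*> <[y]>| <= 39)%N &
      (x != 1 -> y != 1 -> #|<[x]> <*> <[y]>| = 39%N)].
Proof.
move=> x13 y3 xy.
have ny : <[y]> \subset 'N(<[x]>) by rewrite norms_cycle xy mem_cycle.
have dx : (#[x] %| 13)%N by rewrite order_dvdn x13.
have dy : (#[y] %| 3)%N by rewrite order_dvdn y3.
have defJ := norm_joinEr ny.
have le1 : (#|(<[x]> * <[y]>)%g| <= #[x] * #[y])%N.
  have e := mul_cardG <[x]>%G <[y]>%G.
  by rewrite /order e leq_pmulr // cardG_gt0.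
have ox : (#[x] <= 13)%N by apply: dvdn_leq.
have oy : (#[y] <= 3)%N by apply: dvdn_leq.
split=> //.
  by rewrite defJ (leq_trans le1) // (leq_mul ox oy).
move=> nx1 ny1.
have ox13 : #[x] = 13%N.
  case/primeP: (isT : prime 13) => _ /(_ _ dx) /orP[] /eqP // o1.
  by move: nx1; rewrite -order_eq1 o1.
have oy3 : #[y] = 3%N.
  case/primeP: (isT : prime 3) => _ /(_ _ dy) /orP[] /eqP // o1.
  by move: ny1; rewrite -order_eq1 o1.
rewrite defJ TI_cardMg; first by rewrite -/#[x] -/#[y] ox13 oy3.
apply: (coprime_TIg (G := <[x]>%G) (H := <[y]>%G)).
by rewrite /= -/#[x] -/#[y] ox13 oy3.
Qed.
End Grp.

Import GRing.Theory.
Local Open Scope ring_scope.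


Section Bridge.
Variable F : finFieldType.
Hypothesis F3 : (3 \in [pchar F])%N.

Definition toM (M : cmat) : 'M[F]_3 := \matrix_(r < 3, s < 3) (ce M r s)%:R.

Lemma natr3 (k : nat) : (k %% 3)%:R = k%:R :> F.
Proof. exact: GRing.natr_mod_pchar. Qed.

Lemma sum3E (f : 'I_3 -> F) : \sum_(k < 3) f k = f ord0 + f (inord 1) + f (inord 2).
Proof.
rewrite !big_ord_recr big_ord0 /= add0r.
by congr (_ + _ + _); congr f; apply: val_inj; rewrite /= ?inordK.
Qed.

Lemma toM_mul (M N : cmat) : toM (cmul M N) = toM M * toM N.
Proof.
apply/matrixP=> r s; rewrite !mxE sum3E !mxE.
rewrite /cmul /ce /=.
rewrite (nth_mkseq _ _ (ltn_ord r)) (nth_mkseq _ _ (ltn_ord s)) natr3.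
by rewrite !natrD !natrM !inordK.
Qed.

Lemma toM_id : toM cid = 1.
Proof.
apply/matrixP=> r s; rewrite !mxE.
by case: r => [[|[|[|r]]] Hr] //; case: s => [[|[|[|s]]] Hs].
Qed.

Lemma toM_pow (M : cmat) i : toM (cpow M i) = toM M ^+ i.
Proof.
elim: i => [|i IH]; first by rewrite expr0 toM_id.
by rewrite /cpow iterS -/(cpow M i) toM_mul IH exprS.
Qed.

Lemma natr_small_inj (a b : nat) : (a < 3)%N -> (b < 3)%N -> a%:R = b%:R :> F -> a = b.
Proof.
have h1 : (1%:R : F) != 0 by rewrite oner_neq0.
have h2 : (2%:R : F) != 0.
  apply/eqP=> h; move/eqP: h1; apply.
  by rewrite -(pcharf0 F3) (_ : 3 = 2 + 1)%N // natrD h add0r.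
have h21 : (2%:R : F) - 1 = 1 by rewrite mulr2n addrK.
case: a => [|[|[|a]]] //; case: b => [|[|[|b]]] // _ _ /eqP; rewrite ?eqxx //.
- by rewrite eq_sym (negbTE h1).
- by rewrite eq_sym (negbTE h2).
- by rewrite (negbTE h1).
- by rewrite -subr_eq0 -{1}h21 addrAC subrr add0r oppr_eq0 (negbTE h1).
- by rewrite (negbTE h2).
- by rewrite -subr_eq0 h21 (negbTE h1).
Qed.


Local Notation GL := {'GL_3[F]}.
Definition mkGL (A : 'M[F]_3) : GL := insubd (1%g : GL) A.
Lemma mkGLK (A : 'M[F]_3) : A \is a GRing.unit -> GLval (mkGL A) = A.
Proof. by move=> uA; rewrite /mkGL insubdK. Qed.

Definition KT : Type := (GL * (GL * (GL * (GL * GL))))%type.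
HB.instance Definition _ := FinGroup.on KT.
Definition sl (k : KT) (m : nat) : 'M[F]_3 :=
  match m with
  | 0 => GLval k.1 | 1 => GLval k.2.1 | 2 => GLval k.2.2.1
  | 3 => GLval k.2.2.2.1 | _ => GLval k.2.2.2.2 end.

Lemma slM (k1 k2 : KT) m : sl (k1 * k2)%g m = sl k1 m * sl k2 m.
Proof. by case: m => [|[|[|[|m]]]]. Qed.
Lemma sl1 m : sl 1%g m = 1.
Proof. by case: m => [|[|[|[|m]]]]. Qed.
Lemma slV (k : KT) m : sl (k^-1)%g m = (sl k m)^-1.
Proof. by case: m => [|[|[|[|m]]]]. Qed.
Lemma slX (k : KT) m i : sl (k ^+ i)%g m = sl k m ^+ i.
Proof.
elim: i => [|i IH]; first by rewrite expg0 sl1 expr0.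
by rewrite expgS slM IH exprS.
Qed.
Lemma KT_eq (k1 k2 : KT) : (forall m, (m < 5)%N -> sl k1 m = sl k2 m) -> k1 = k2.
Proof.
case: k1 => a1 [b1 [c1 [d1 e1]]]; case: k2 => a2 [b2 [c2 [d2 e2]]] h.
congr (_, (_, (_, (_, _)))); apply: val_inj.
- exact: (h 0%N isT).
- exact: (h 1%N isT).
- exact: (h 2%N isT).
- exact: (h 3%N isT).
- exact: (h 4%N isT).
Qed.

Lemma rel_m m : (m < 5)%N ->
  [/\ cpow (Xc m) 13 = cid, cpow (Yc m) 3 = cid &
      cmul (Xc m) (Yc m) = cmul (Yc m) (cpow (Xc m) 3)].
Proof.
move=> Hm; have := allP checkrel_ok m; rewrite mem_iota add0n => /(_ Hm).
by case/and3P=> /eqP-> /eqP-> /eqP->.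
Qed.

Lemma unit_of_pow (A : 'M[F]_3) k : A ^+ k.+1 = 1 -> A \is a GRing.unit.
Proof.
move=> h; apply/unitrP; exists (A ^+ k); split.
  by rewrite -exprSr.
by rewrite -exprS.
Qed.

Lemma Xm_rel m : (m < 5)%N -> toM (Xc m) ^+ 13 = 1.
Proof. by case/rel_m=> h _ _; rewrite -toM_pow h toM_id. Qed.
Lemma Ym_rel m : (m < 5)%N -> toM (Yc m) ^+ 3 = 1.
Proof. by case/rel_m=> _ h _; rewrite -toM_pow h toM_id. Qed.
Lemma XYm_rel m : (m < 5)%N -> toM (Xc m) * toM (Yc m) = toM (Yc m) * toM (Xc m) ^+ 3.
Proof. by case/rel_m=> _ _ h; rewrite -toM_mul h toM_mul toM_pow. Qed.

Definition gen (c : nat -> cmat) : KT :=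
  (mkGL (toM (c 0%N)), (mkGL (toM (c 1%N)), (mkGL (toM (c 2%N)),
     (mkGL (toM (c 3%N)), mkGL (toM (c 4%N)))))).
Definition gX := gen Xc.
Definition gY := gen Yc.

Lemma sl_gen (c : nat -> cmat) m : (m < 5)%N ->
  (forall m, (m < 5)%N -> toM (c m) \is a GRing.unit) -> sl (gen c) m = toM (c m).
Proof.
move=> Hm hu; have := hu m Hm.
by case: m Hm => [|[|[|[|[|m]]]]] //= _ u; rewrite mkGLK.
Qed.

Lemma sl_gX m : (m < 5)%N -> sl gX m = toM (Xc m).
Proof. move=> Hm; apply: sl_gen => // k Hk; exact: unit_of_pow (Xm_rel Hk). Qed.
Lemma sl_gY m : (m < 5)%N -> sl gY m = toM (Yc m).
Proof. move=> Hm; apply: sl_gen => // k Hk; exact: unit_of_pow (Ym_rel Hk). Qed.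

Lemma gX13 : (gX ^+ 13 = 1)%g.
Proof. by apply: KT_eq => m Hm; rewrite slX sl1 sl_gX // Xm_rel. Qed.
Lemma gY3 : (gY ^+ 3 = 1)%g.
Proof. by apply: KT_eq => m Hm; rewrite slX sl1 sl_gY // Ym_rel. Qed.
Lemma gXY : (gX ^ gY = gX ^+ 3)%g.
Proof.
apply: KT_eq => m Hm; rewrite slX /conjg !slM slV sl_gX // sl_gY //.
have uY : toM (Yc m) \is a GRing.unit by exact: unit_of_pow (Ym_rel Hm).
by rewrite XYm_rel // mulKr.
Qed.
Lemma gX1 : (gX != 1)%g.
Proof.
apply/eqP=> /(congr1 (fun k => sl k 1%N)); rewrite sl1 sl_gX //.
move/matrixP=> /(_ ord0 ord0); rewrite !mxE /= => /eqP; by rewrite eq_sym oner_eq0.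
Qed.
Lemma gY1 : (gY != 1)%g.
Proof.
apply/eqP=> /(congr1 (fun k => sl k 1%N)); rewrite sl1 sl_gY //.
move/matrixP=> /(_ ord0 ord0); rewrite !mxE /= => /eqP; by rewrite eq_sym oner_eq0.
Qed.
End Bridge.


Section Main.
Variables (F : finFieldType) (F3 : (3 \in [pchar F])%N).
Variables (gX gY : KT F).
Hypotheses (X13 : (gX ^+ 13 = 1)%g) (Y3 : (gY ^+ 3 = 1)%g) (XY : (gX ^ gY = gX ^+ 3)%g)
  (X1 : (gX != 1)%g) (Y1 : (gY != 1)%g)
  (slXe : forall m, (m < 5)%N -> sl gX m = toM F (Xc m))
  (slYe : forall m, (m < 5)%N -> sl gY m = toM F (Yc m)).
Variables (gT : finGroupType) (G : {group gT}) (phi : {morphism G >-> KT F}).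
Hypotheses (injphi : ('injm phi)%g) (imphi : (phi @* G = <[gX]> <*> <[gY]>)%g).

Definition hp (p : 'I_39) : KT F := (gX ^+ (p %% 13) * gY ^+ (p %/ 13))%g.

Lemma H_facts : ((<[gX]> <*> <[gY]>)%g = [set hp p | p : 'I_39]) /\ injective hp.
Proof.
have [defJ _ c39] := grp_facts X13 Y3 XY.
have c := c39 X1 Y1.
have eqH : (<[gX]> <*> <[gY]>)%g = [set hp p | p : 'I_39].
  apply/eqP; rewrite eqEsubset; apply/andP; split; last first.
    apply/subsetP=> _ /imsetP[p _ ->]; rewrite defJ.
    by apply: mem_mulg; apply: mem_cycle.
  apply/subsetP=> h; rewrite defJ => /mulsgP[a b /cycleP[i ->] /cycleP[k ->] ->].
  have lt : (i %% 13 + 13 * (k %% 3) < 39)%N.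
    have h1 := ltn_pmod i (isT : (0 < 13)%N); have h2 := ltn_pmod k (isT : (0 < 3)%N).
    lia.
  apply/imsetP; exists (Ordinal lt); first by [].
  rewrite /hp /=.
  have e1 : ((i %% 13 + 13 * (k %% 3)) %% 13 = i %% 13)%N.
    by rewrite addnC mulnC modnMDl modn_mod.
  have e2 : ((i %% 13 + 13 * (k %% 3)) %/ 13 = k %% 3)%N.
    by rewrite addnC mulnC divnMDl // divn_small ?ltn_pmod ?addn0.
  rewrite e1 e2 (expg_mod _ X13) (expg_mod _ Y3).
  reflexivity.
split=> //.
have /imset_injP hinj : #|[set hp p | p : 'I_39]| == #|'I_39| by rewrite -eqH c card_ord.
by move=> p1 p2 e; apply: hinj.
Qed.

Definition gp (p : 'I_39) : gT := invm injphi (hp p).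

Lemma hp_in p : hp p \in (phi @* G)%g.
Proof. by rewrite imphi (proj1 H_facts) imset_f. Qed.

Lemma phi_gp p : phi (gp p) = hp p.
Proof. exact: invmK (hp_in p). Qed.

Lemma gp_in p : gp p \in G.
Proof.
have := hp_in p; rewrite morphimEdom => /imsetP[g Gg e].
by rewrite /gp e invmE.
Qed.

Lemma gp_inj : injective gp.
Proof. by move=> p1 p2 e; apply: (proj2 H_facts); rewrite -!phi_gp e. Qed.

Lemma G_eq : (G : {set gT}) = [set gp p | p : 'I_39].
Proof.
apply/eqP; rewrite eqEsubset; apply/andP; split; apply/subsetP => g.
  move=> Gg; have : phi g \in (phi @* G)%g by apply: mem_morphim.
  rewrite imphi (proj1 H_facts) => /imsetP[p _ e].
  by apply/imsetP; exists p => //; rewrite /gp -e invmE.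
by case/imsetP=> p _ ->; apply: gp_in.
Qed.

Lemma sumG (V : nmodType) (f : gT -> V) :
  \sum_(g in G) f g = \sum_(p < 39) f (gp p).
Proof.
rewrite G_eq big_imset /=; last by move=> p1 p2 _ _; apply: gp_inj.
by apply: eq_bigl.
Qed.

Lemma rho_gp (p : 'I_39) m : (m < 5)%N ->
  sl (phi (gp p)) m = toM F (Pm m (p %% 13) (p %/ 13)).
Proof.
move=> Hm; rewrite phi_gp /hp slM !slX slXe // slYe //.
by rewrite /Pm toM_mul // !toM_pow.
Qed.

Lemma rhoM g h m : g \in G -> h \in G ->
  sl (phi (g * h)%g) m = sl (phi g) m * sl (phi h) m.
Proof. by move=> Gg Gh; rewrite morphM // slM. Qed.

Definition BT := {ffun 'I_5 -> 'M[F]_3}.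
Definition Phi (a : {ffun gT -> F}) : BT :=
  [ffun m : 'I_5 => \sum_(g in G) a g *: sl (phi g) m].
Definition bmul (b1 b2 : BT) : BT := [ffun m => b1 m * b2 m].
Definition bone : BT := [ffun m => 1].

Lemma PhiE a (m : 'I_5) r s :
  Phi a m r s = \sum_(p < 39) a (gp p) * (Pf p m r s)%:R.
Proof.
rewrite ffunE summxE sumG; apply: eq_bigr => p _.
by rewrite mxE rho_gp // mxE.
Qed.

Lemma PhiM a b : Phi (ga_mul G a b) = bmul (Phi a) (Phi b).
Proof.
apply/ffunP => m; rewrite !ffunE.
under eq_bigr => g Gg do rewrite ffunE scaler_suml.
rewrite exchange_big /=.
transitivity (\sum_(h in G) a h *: (sl (phi h) m * \sum_(g in G) b g *: sl (phi g) m)).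
  apply: eq_bigr => h Gh.
  rewrite mulr_sumr scaler_sumr (reindex_inj (mulgI h)) /=.
  apply: eq_big => [g | g Gg]; first by rewrite groupMl.
  have Gg' : g \in G by rewrite -(groupMl _ Gh).
  rewrite mulKg rhoM // -scalerA; congr (_ *: _).
  exact: scalerAr.
rewrite (@mulr_suml 'M[F]_3); apply: eq_bigr => h _.
exact: scalerAl.
Qed.

Lemma Phi1 : Phi (ga_one F gT) = bone.
Proof.
apply/ffunP => m; rewrite !ffunE (bigD1 1%g) //= big1 ?addr0.
  by rewrite ffunE eqxx scale1r morph1 sl1.
by move=> g /andP[_ ng1]; rewrite ffunE (negbTE ng1) scale0r.
Qed.

Lemma bigsumE n (f : nat -> nat) : (\sum_(i < n) f i)%N = csum n f.
Proof. by rewrite /csum sumnE big_map -(big_mkord xpredT) /index_iota subn0. Qed.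

Lemma sum3_nat (f : nat -> nat -> nat -> nat) :
  (\sum_(m < 5) \sum_(r < 3) \sum_(s < 3) f m r s)%N = csum3 f.
Proof.
rewrite /csum3 -bigsumE; apply: eq_bigr => m _.
rewrite -bigsumE; apply: eq_bigr => r _.
by rewrite -bigsumE.
Qed.

Lemma check1_at (p p' : nat) : (p < 39)%N -> (p' < 39)%N ->
  (csum3 (fun m r s => Wf p m r s * Pf p' m r s) %% 3)%N = (p == p') :> nat.
Proof.
move=> hp hp'; have := allP check1_ok p; rewrite mem_iota add0n => /(_ hp).
by move=> /allP /(_ p'); rewrite mem_iota add0n => /(_ hp') /eqP.
Qed.

Definition psi (p : nat) (b : BT) : F :=
  \sum_(m < 5) \sum_(r < 3) \sum_(s < 3) (Wf p m r s)%:R * b m r s.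

Lemma psi_Phi a (p : 'I_39) : psi p (Phi a) = a (gp p).
Proof.
rewrite /psi.
under eq_bigr => m _ do under eq_bigr => r _ do under eq_bigr => s _ do
  rewrite PhiE mulr_sumr.
under eq_bigr => m _ do under eq_bigr => r _ do rewrite exchange_big.
under eq_bigr => m _ do rewrite exchange_big.
rewrite exchange_big /=.
transitivity (\sum_(p' < 39) a (gp p') *
   (csum3 (fun m r s => Wf p m r s * Pf p' m r s))%:R).
  apply: eq_bigr => p' _.
  rewrite -sum3_nat natr_sum mulr_sumr; apply: eq_bigr => m _.
  rewrite natr_sum mulr_sumr; apply: eq_bigr => r _.
  rewrite natr_sum mulr_sumr; apply: eq_bigr => s _.
  by rewrite natrM mulrCA.
rewrite (bigD1 p) //= big1 ?addr0.
  by rewrite -(natr3 F3) check1_at // eqxx mulr1.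
move=> p' np; rewrite -(natr3 F3) check1_at //.
rewrite (_ : (p == p' :> nat) = false) ?mulr0 //.
by apply/negbTE; rewrite eq_sym.
Qed.

Lemma Phi_inj a a' : ga_supp G a -> ga_supp G a' -> Phi a = Phi a' -> a = a'.
Proof.
move=> /forallP sa /forallP sa' e; apply/ffunP => g.
have [Gg | nGg] := boolP (g \in G); last first.
  by move: (sa g) (sa' g); rewrite nGg /= => /eqP-> /eqP->.
move: Gg; rewrite G_eq => /imsetP[p _ ->].
by rewrite -!psi_Phi e.
Qed.

Definition inB (b : BT) : Prop :=
  forall r s : 'I_3, b ord0 r s = if (r <= s)%N then b ord0 ord0 (inord (s - r)) else 0.

Lemma check0_at (p r s : nat) : (p < 39)%N -> (r < 3)%N -> (s < 3)%N ->
  Pf p 0 r s = if (r <= s)%N then Pf p 0 0 (s - r) else 0%N.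
Proof.
move=> hp hr hs; have := allP check0_ok p; rewrite mem_iota add0n => /(_ hp).
move=> /allP /(_ r); rewrite mem_iota add0n => /(_ hr).
by move=> /allP /(_ s); rewrite mem_iota add0n => /(_ hs) /eqP.
Qed.

Lemma check2_at (m r s m' r' s' : nat) : (m < 5)%N -> (r < 3)%N -> (s < 3)%N ->
  (m' < 5)%N -> (r' < 3)%N -> (s' < 3)%N ->
  (csum 39 (fun p => Wf p m' r' s' * Pf p m r s) %% 3)%N = ((m', r', s') == pi3 m r s) :> nat.
Proof.
move=> hm hr hs hm' hr' hs'.
have := allP check2_ok m; rewrite mem_iota add0n => /(_ hm).
move=> /allP /(_ r); rewrite mem_iota add0n => /(_ hr).
move=> /allP /(_ s); rewrite mem_iota add0n => /(_ hs).
move=> /allP /(_ m'); rewrite mem_iota add0n => /(_ hm').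
move=> /allP /(_ r'); rewrite mem_iota add0n => /(_ hr').
by move=> /allP /(_ s'); rewrite mem_iota add0n => /(_ hs') /eqP.
Qed.

Lemma Phi_inB a : inB (Phi a).
Proof.
move=> r s; rewrite PhiE; case: ifP => hrs.
  rewrite PhiE; apply: eq_bigr => p _; congr (_ * _%:R).
  rewrite check0_at // hrs inordK //.
  by apply: leq_ltn_trans (leq_subr _ _) (ltn_ord s).
by rewrite big1 // => p _; rewrite check0_at // hrs mulr0.
Qed.

Definition Psi (b : BT) : {ffun gT -> F} :=
  [ffun g => if [pick p : 'I_39 | gp p == g] is Some p then psi p b else 0].

Lemma Psi_gp b p : Psi b (gp p) = psi p b.
Proof.
rewrite ffunE; case: pickP => [p' /eqP e | /(_ p)]; last by rewrite eqxx.
by rewrite (gp_inj e).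
Qed.

Lemma Psi_supp b : ga_supp G (Psi b).
Proof.
apply/forallP => g; apply/implyP => nGg; rewrite ffunE.
case: pickP => // p /eqP e; move: nGg; by rewrite -e gp_in.
Qed.

Lemma pick1 n (g : 'I_n.+1 -> F) (k : nat) :
  \sum_(i < n.+1) g i * (i == k :> nat)%:R = if (k < n.+1)%N then g (inord k) else 0.
Proof.
case: ifP => hk.
  rewrite (bigD1 (inord k)) //= inordK // eqxx mulr1 big1 ?addr0 // => i ni.
  rewrite (_ : (i == k :> nat) = false) ?mulr0 //.
  apply/negbTE; apply: contra ni => /eqP e; apply/eqP/val_inj; by rewrite /= inordK // e.
rewrite big1 // => i _; rewrite (_ : (i == k :> nat) = false) ?mulr0 //.
by apply/negbTE/eqP => e; move: hk; rewrite -e ltn_ord.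
Qed.

Lemma pick3 (f : 'I_5 -> 'I_3 -> 'I_3 -> F) (t : nat * nat * nat) :
  \sum_(m < 5) \sum_(r < 3) \sum_(s < 3) f m r s * ((((m : nat), (r : nat)), (s : nat)) == t)%:R =
  if [&& t.1.1 < 5, t.1.2 < 3 & t.2 < 3]%N then f (inord t.1.1) (inord t.1.2) (inord t.2) else 0.
Proof.
case: t => [[m0 r0] s0] /=.
transitivity (\sum_(m < 5) (\sum_(r < 3) (\sum_(s < 3) f m r s * (s == s0 :> nat)%:R)
   * (r == r0 :> nat)%:R) * (m == m0 :> nat)%:R).
  apply: eq_bigr => m _; rewrite mulr_suml; apply: eq_bigr => r _.
  rewrite !mulr_suml; apply: eq_bigr => s _.
  by rewrite !xpair_eqE; do 3 case: eqP => _ /=; rewrite ?mulr0 ?mulr1 ?mul0r.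
under eq_bigr => m _ do under eq_bigr => r _ do rewrite pick1.
under eq_bigr => m _ do rewrite pick1.
rewrite pick1.
by case: (m0 < 5)%N; case: (r0 < 3)%N; case: (s0 < 3)%N; rewrite ?mul0r.
Qed.

Lemma swap3 (h : 'I_39 -> 'I_5 -> 'I_3 -> 'I_3 -> F) :
  \sum_(p < 39) \sum_(m < 5) \sum_(r < 3) \sum_(s < 3) h p m r s =
  \sum_(m < 5) \sum_(r < 3) \sum_(s < 3) \sum_(p < 39) h p m r s.
Proof.
rewrite exchange_big; apply: eq_bigr => m _.
rewrite exchange_big; apply: eq_bigr => r _.
exact: exchange_big.
Qed.

Lemma Phi_Psi b : inB b -> Phi (Psi b) = b.
Proof.
move=> hb; apply/ffunP => m; apply/matrixP => r s.
rewrite PhiE.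
transitivity (\sum_(p < 39) \sum_(m' < 5) \sum_(r' < 3) \sum_(s' < 3)
    (Wf p m' r' s')%:R * b m' r' s' * (Pf p m r s)%:R).
  apply: eq_bigr => p _; rewrite Psi_gp /psi mulr_suml; apply: eq_bigr => m' _.
  rewrite mulr_suml; apply: eq_bigr => r' _; by rewrite mulr_suml.
rewrite swap3.
transitivity (\sum_(m' < 5) \sum_(r' < 3) \sum_(s' < 3) b m' r' s' *
   ((((m' : nat), (r' : nat)), (s' : nat)) == pi3 m r s)%:R).
  apply: eq_bigr => m' _; apply: eq_bigr => r' _; apply: eq_bigr => s' _.
  rewrite -(check2_at (ltn_ord m) (ltn_ord r) (ltn_ord s) (ltn_ord m') (ltn_ord r') (ltn_ord s')).
  rewrite natr3 // -bigsumE natr_sum mulr_sumr; apply: eq_bigr => p _.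
  by rewrite natrM mulrAC mulrC.
rewrite pick3.
have [m0 | mn0] := eqVneq (m : nat) 0%N; last first.
  by rewrite /pi3 (negbTE mn0) /= !ltn_ord !inord_val.
have -> : m = ord0 by apply: val_inj.
rewrite hb /pi3 /=; case hrs: (r <= s)%N => //=.
rewrite (leq_ltn_trans (leq_subr _ _) (ltn_ord s)) /=.
by congr (b _ _ _); apply: val_inj; rewrite /= inordK.
Qed.
End Main.


Section Toep.
Variables (F : finFieldType) (F3 : (3 \in [pchar F])%N).

Definition tz (a b c : F) (r s : nat) : F :=
  if (r <= s)%N then nth 0 [:: a; b; c] (s - r) else 0.
Definition mkT (a b c : F) : 'M[F]_3 := \matrix_(r < 3, s < 3) tz a b c r s.

Lemma mkT_mul a1 b1 c1 a2 b2 c2 :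
  mkT a1 b1 c1 * mkT a2 b2 c2 =
  mkT (a1 * a2) (a1 * b2 + b1 * a2) (a1 * c2 + b1 * b2 + c1 * a2).
Proof.
apply/matrixP => r s; rewrite !mxE sum3E !mxE !inordK //.
case: r => [[|[|[|r]]] Hr] //; case: s => [[|[|[|s]]] Hs] //; rewrite /tz /=; ring.
Qed.

Lemma mkT1 : mkT 1 0 0 = 1.
Proof.
apply/matrixP => r s; rewrite !mxE.
by case: r => [[|[|[|r]]] Hr] //; case: s => [[|[|[|s]]] Hs].
Qed.

Definition al (b : BT F) : F := b ord0 ord0 (inord 0).
Definition be (b : BT F) : F := b ord0 ord0 (inord 1).
Definition ga (b : BT F) : F := b ord0 ord0 (inord 2).

Lemma inB_T (b : BT F) : inB b -> b ord0 = mkT (al b) (be b) (ga b).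
Proof.
move=> hb; apply/matrixP => r s; rewrite hb !mxE /tz; case: ifP => // hrs.
have : (s - r < 3)%N by apply: leq_ltn_trans (leq_subr _ _) (ltn_ord s).
move: (s - r)%N => k; by case: k => [|[|[|k]]].
Qed.

Lemma T_inB (b : BT F) a0 b0 c0 : b ord0 = mkT a0 b0 c0 -> inB b.
Proof.
move=> e r s; rewrite e !mxE /tz subn0 leq0n; case: ifP => // hrs.
by rewrite inordK //; apply: leq_ltn_trans (leq_subr _ _) (ltn_ord s).
Qed.

Lemma T_al a0 b0 c0 (b : BT F) : b ord0 = mkT a0 b0 c0 ->
  [/\ al b = a0, be b = b0 & ga b = c0].
Proof. by move=> e; rewrite /al /be /ga e !mxE /tz !inordK. Qed.
End Toep.

Section Tgt.
Variables (F : finFieldType) (F3 : (3 \in [pchar F])%N).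
Variables (n : nat) (npos : (0 < n)%N).
Variables (crd : F -> {ffun 'I_n -> 'Z_3}) (dec : {ffun 'I_n -> 'Z_3} -> F).
Hypotheses (crdD : forall x y, crd (x + y) = [ffun i => crd x i + crd y i])
  (decK : forall z, crd (dec z) = z) (crdK : forall x, dec (crd x) = x).
Variables (ex : 'Z_(3 ^ n - 1) -> F) (lg : F -> 'Z_(3 ^ n - 1)).
Hypotheses (exD : forall k l, ex (k + l) = ex k * ex l) (exnz : forall k, ex k != 0)
  (exK : forall a, a != 0 -> ex (lg a) = a) (lgK : forall k, lg (ex k) = k).

Definition sel (i : 'I_(2 * n)) : 'I_n := Ordinal (ltn_pmod i npos).
Definition Zc (x y : F) : {ffun 'I_(2 * n) -> 'Z_3} :=
  [ffun i : 'I_(2 * n) => if (i < n)%N then crd x (sel i) else crd y (sel i)].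

Lemma ZcD x y x' y' : Zc (x + x') (y + y') = [ffun i : 'I_(2 * n) => Zc x y i + Zc x' y' i].
Proof. by apply/ffunP => i; rewrite !ffunE; case: ifP => _; rewrite crdD ffunE. Qed.

Lemma lo_lt (j : 'I_n) : (j < 2 * n)%N.
Proof. have := ltn_ord j; lia. Qed.
Lemma hi_lt (j : 'I_n) : (j + n < 2 * n)%N.
Proof. have := ltn_ord j; lia. Qed.

Lemma sel_lo j : sel (Ordinal (lo_lt j)) = j.
Proof. by apply: val_inj; rewrite /= modn_small. Qed.
Lemma sel_hi j : sel (Ordinal (hi_lt j)) = j.
Proof. by apply: val_inj; rewrite /= modnDr modn_small. Qed.

Lemma Zc_inj x y x' y' : Zc x y = Zc x' y' -> x = x' /\ y = y'.
Proof.
move=> e; split.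
  rewrite -(crdK x) -(crdK x'); congr dec; apply/ffunP => j.
  have := congr1 (fun f : {ffun 'I_(2 * n) -> 'Z_3} => f (Ordinal (lo_lt j))) e; rewrite !ffunE /= ltn_ord.
  by rewrite sel_lo.
rewrite -(crdK y) -(crdK y'); congr dec; apply/ffunP => j.
have := congr1 (fun f : {ffun 'I_(2 * n) -> 'Z_3} => f (Ordinal (hi_lt j))) e; rewrite !ffunE /=.
by rewrite ltnNge leq_addl /= sel_hi.
Qed.

Lemma Zc_sur z : exists x y, Zc x y = z.
Proof.
exists (dec [ffun j => z (Ordinal (lo_lt j))]), (dec [ffun j => z (Ordinal (hi_lt j))]).
apply/ffunP => i; rewrite !ffunE !decK !ffunE; case: ifP => hi.
  by have -> : Ordinal (lo_lt (sel i)) = i by apply: val_inj; rewrite /= modn_small.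
have -> // : Ordinal (hi_lt (sel i)) = i.
have hi' : (n <= i)%N by rewrite leqNgt hi.
have := ltn_ord i => hi2.
apply: val_inj => /=.
rewrite -{1}(subnK hi') modnDr modn_small ?subnK //; lia.
Qed.

Definition c3 (b : BT F) := Zc (be b / al b) (ga b / al b + (be b / al b) ^+ 2).
Definition tgt (b : BT F) : target n F :=
  (c3 b, lg (al b), [ffun j : 'I_4 => mkGL (b (lift ord0 j))]).
Definition UB (b : BT F) : Prop :=
  [/\ inB b, al b != 0 & forall j : 'I_4, b (lift ord0 j) \is a GRing.unit].

Lemma bmul_T (b1 b2 : BT F) : inB b1 -> inB b2 ->
  (bmul b1 b2) ord0 = mkT (al b1 * al b2) (al b1 * be b2 + be b1 * al b2)
                          (al b1 * ga b2 + be b1 * be b2 + ga b1 * al b2).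
Proof. by move=> h1 h2; rewrite ffunE (inB_T h1) (inB_T h2) mkT_mul. Qed.

Lemma mkGLM (A B : 'M[F]_3) : A \is a GRing.unit -> B \is a GRing.unit ->
  mkGL (A * B) = (mkGL A * mkGL B)%g.
Proof.
move=> uA uB; apply: val_inj => /=.
have uAB : A * B \is a GRing.unit by rewrite unitrMl.
exact: (etrans (mkGLK uAB) (congr2 _ (esym (mkGLK uA)) (esym (mkGLK uB)))).
Qed.

Lemma three0 : 3%:R = 0 :> F.
Proof. exact: pcharf0 F3. Qed.

Lemma tgtM b1 b2 : UB b1 -> UB b2 -> tgt (bmul b1 b2) = target_mul (tgt b1) (tgt b2).
Proof.
case=> i1 a1 u1 [i2 a2 u2].
have [eal ebe ega] := T_al (bmul_T i1 i2).
rewrite /tgt /target_mul /=; congr (_, _, _).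
- rewrite /c3 ebe ega eal -ZcD; congr Zc.
    by field; apply/andP.
  set x1 := be b1 / al b1; set x2 := be b2 / al b2.
  rewrite -[RHS]addr0 -(mul0r (x1 * x2)) -three0.
  rewrite /x1 /x2; field; by apply/andP.
- by rewrite eal -{1}(exK a1) -{1}(exK a2) -exD lgK.
apply/ffunP => j; rewrite !ffunE mkGLM //.
Qed.

Lemma tgt_inj b1 b2 : UB b1 -> UB b2 -> tgt b1 = tgt b2 -> b1 = b2.
Proof.
case=> i1 a1 u1 [i2 a2 u2]; rewrite /tgt /c3 => -[ec el eg].
have eal : al b1 = al b2 by rewrite -(exK a1) -(exK a2) el.
have [ex1 ey1] := Zc_inj ec.
have ebe : be b1 = be b2.
  by rewrite -(divfK a1 (be b1)) ex1 eal divfK.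
have ega : ga b1 = ga b2.
  move: ey1; rewrite ex1 => /addIr e2.
  by rewrite -(divfK a1 (ga b1)) e2 eal divfK.
apply/ffunP => m; case: (unliftP ord0 m) => [j -> | ->].
  have := congr1 (fun f : {ffun 'I_4 -> {'GL_3[F]}} => GLval (f j)) eg.
  by rewrite /= !ffunE !mkGLK.
by rewrite (inB_T i1) (inB_T i2) eal ebe ega.
Qed.

Definition mkB (A0 : 'M[F]_3) (f : 'I_4 -> 'M[F]_3) : BT F :=
  [ffun m : 'I_5 => if unlift ord0 m is Some j then f j else A0].

Lemma mkB0 A0 f : mkB A0 f ord0 = A0.
Proof. by rewrite ffunE unlift_none. Qed.
Lemma mkBl A0 f j : mkB A0 f (lift ord0 j) = f j.
Proof. by rewrite ffunE liftK. Qed.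

Lemma tgt_sur t : exists b, UB b /\ tgt b = t.
Proof.
case: t => [[z k] gs]; have [x [y e]] := Zc_sur z.
set a := ex k.
have az : a != 0 by apply: exnz.
pose b := mkB (mkT a (a * x) (a * (y - x ^+ 2))) (fun j => GLval (gs j)).
have b0 : b ord0 = mkT a (a * x) (a * (y - x ^+ 2)) by rewrite mkB0.
have [eal ebe ega] := T_al b0.
exists b; split.
  split; first exact: T_inB b0.
    by rewrite eal.
  by move=> j; rewrite mkBl; exact: (GL_unit (gs j)).
rewrite /tgt /c3 eal ebe ega lgK; congr (_, _, _).
  rewrite -e; congr Zc; rewrite ![a * _]mulrC !mulfK //.
  by rewrite subrK.
apply/ffunP => j; rewrite ffunE mkBl; apply: val_inj.
exact: (mkGLK (GL_unit (gs j))).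
Qed.

Lemma UB_inv b : UB b -> exists b', [/\ inB b', bmul b b' = bone F & bmul b' b = bone F].
Proof.
case=> ib ab ub.
pose a' := (al b)^-1; pose be' := - be b / al b ^+ 2;
  pose ga' := (be b ^+ 2 / al b - ga b) / al b ^+ 2.
pose b' := mkB (mkT a' be' ga') (fun j => (b (lift ord0 j))^-1).
have b'0 : b' ord0 = mkT a' be' ga' by rewrite mkB0.
have ib' : inB b' by exact: T_inB b'0.
have [eal ebe ega] := T_al b'0.
exists b'; split => //.
  apply/ffunP => m; rewrite !ffunE; case: (unliftP ord0 m) => [j -> | ->].
    by rewrite mulrV.
  rewrite (inB_T ib) mkT_mul -mkT1.
  by congr mkT; rewrite /a' /be' /ga'; field.
apply/ffunP => m; rewrite !ffunE; case: (unliftP ord0 m) => [j -> | ->].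
  by rewrite mulVr.
rewrite (inB_T ib) mkT_mul -mkT1.
by congr mkT; rewrite /a' /be' /ga'; field.
Qed.

Lemma UB_of b b' : inB b -> inB b' -> bmul b b' = bone F -> UB b.
Proof.
move=> ib ib' e; split => //.
  have := congr1 (fun f : BT F => f ord0) e; rewrite bmul_T // ffunE -mkT1.
  move/matrixP => /(_ ord0 ord0); rewrite !mxE /tz /=.
  by move=> h; apply/eqP => h0; move: h; rewrite h0 mul0r => /eqP; rewrite eq_sym oner_eq0.
move=> j; have := congr1 (fun f : BT F => f (lift ord0 j)) e; rewrite !ffunE.
by case/mulmx1_unit.
Qed.
End Tgt.


Lemma coords_exist (F : finFieldType) (n : nat) (F3 : (3 \in [pchar F])%N)
  (cF : #|F| = (3 ^ n)%N) :
  exists (crd : F -> {ffun 'I_n -> 'Z_3}) (dec : {ffun 'I_n -> 'Z_3} -> F),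
    [/\ forall x y, crd (x + y) = [ffun i => crd x i + crd y i],
        forall z, crd (dec z) = z & forall x, dec (crd x) = x].
Proof.
have := pprimeChar_vectAxiom F3.
have dn : logn 3 #|pPrimeCharType F3| = n by rewrite cF pfactorK.
move: (logn 3 #|pPrimeCharType F3|) dn => d dn; subst d.
case=> v2r lin [r2v K1 K2].
pose crd (x : F) : {ffun 'I_n -> 'Z_3} := [ffun i => (v2r x 0 i : 'Z_3)].
pose dec (z : {ffun 'I_n -> 'Z_3}) : F := r2v (\row_i (z i : 'F_3)).
exists crd, dec; split.
- move=> x y; apply/ffunP => i; rewrite !ffunE.
  have := lin 1 x y; rewrite scale1r => ->.
  by rewrite scale1r mxE.
- by move=> z; apply/ffunP => i; rewrite /crd /dec ffunE K2 mxE.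
- move=> x; rewrite /dec /crd; rewrite -[RHS]K1; congr r2v.
  by apply/rowP => i; rewrite !mxE ffunE.
Qed.

Lemma exp_exist (F : finFieldType) (n : nat) (n1 : (1 <= n)%N) (cF : #|F| = (3 ^ n)%N) :
  exists (ex : 'Z_(3 ^ n - 1) -> F) (lg : F -> 'Z_(3 ^ n - 1)),
   [/\ forall k l, ex (k + l) = ex k * ex l, forall k, ex k != 0,
       forall a, a != 0 -> ex (lg a) = a & forall k, lg (ex k) = k].
Proof.
set m := (3 ^ n - 1)%N.
have m2 : (1 < m)%N.
  rewrite /m; have : (3 ^ 1 <= 3 ^ n)%N by rewrite leq_exp2l.
  by rewrite expn1; lia.
have [u defU] := cyclicP (field_unit_group_cyclic [set: {unit F}]%G).
have ou : #[u]%g = m.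
  by rewrite /order -defU card_finField_unit cF /m subn1.
have mE : (Zp_trunc m).+2 = m by rewrite Zp_cast.
pose ex (k : 'Z_m) : F := FinRing.uval (u ^+ k)%g.
pose lg (a : F) : 'Z_m := odflt 0 [pick k : 'Z_m | ex k == a].
have exinj : injective ex.
  move=> k l /val_inj /eqP; rewrite eq_expg_mod_order ou => /eqP.
  have hk : (k < m)%N := leq_trans (ltn_ord k) (eq_leq mE).
  have hl : (l < m)%N := leq_trans (ltn_ord l) (eq_leq mE).
  by rewrite !modn_small // => /val_inj.
exists ex, lg; split.
- move=> k l; rewrite /ex -FinRing.val_unitM -expgD; congr FinRing.uval.
  have e : forall a : nat, (a %% (Zp_trunc m).+2 = a %% m)%N by move=> a; rewrite mE.
  by rewrite -(expg_mod_order u (k + l)%N) ou /= e.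
- by move=> k; rewrite -unitfE /ex; apply: (valP (u ^+ k)%g).
- move=> a a0.
  have ua : a \is a GRing.unit by rewrite unitfE.
  have : (FinRing.unit F ua) \in <[u]>%g by rewrite -defU inE.
  case/cycleP => i ei.
  rewrite /lg; case: pickP => [k /eqP // | /(_ (inZp i))].
  have e' : (i %% (Zp_trunc m).+2 = i %% m)%N by rewrite mE.
  by rewrite /ex /= e' -ou expg_mod_order -ei /= eqxx.
- move=> k; rewrite /lg; case: pickP => [k' /eqP /exinj // | /(_ k)].
  by rewrite eqxx.
Qed.


Lemma ga_mul_supp (F : finFieldType) (gT : finGroupType) (G : {group gT}) (a b : {ffun gT -> F}) :
  ga_supp G b -> ga_supp G (ga_mul G a b).
Proof.
move=> /forallP sb; apply/forallP => g; apply/implyP => nGg; rewrite ffunE.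
rewrite big1 // => h Gh; have := sb (h^-1 * g)%g.
by rewrite groupMl ?groupV // nGg /= => /eqP->; rewrite mulr0.
Qed.

Lemma ga_one_supp (F : finFieldType) (gT : finGroupType) (G : {group gT}) :
  ga_supp G (ga_one F gT).
Proof.
apply/forallP => g; apply/implyP => nGg; rewrite ffunE.
have [e | ne] := eqVneq g 1%g; first by rewrite e group1 in nGg.
by [].
Qed.


Local Close Scope ring_scope.

Theorem theorem4p1 (n : nat) (F : finFieldType) (gT : finGroupType) (G : {group gT}) :
  (1 <= n)%N -> #|F| = (3 ^ n)%N ->
  (G \isog Grp (x : y : (x ^+ 13 = 1, y ^+ 3 = 1, x ^ y = x ^+ 3)))%g ->
  exists f : {ffun gT -> F} -> target n F,
    [/\ {in ga_units F G &, injective f},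
        (forall t : target n F, exists2 a, a \in ga_units F G & f a = t) &
        {in ga_units F G &, forall a b, f (ga_mul G a b) = target_mul (f a) (f b)}].
Proof.
move=> n1 cF hiso.
have F3 : (3 \in [pchar F]%R)%N by apply: (card_finPcharP cF).
move: (gX13 F3) (gY3 F3) (gXY F3) (gX1 F3) (gY1 F3) (@sl_gX F F3) (@sl_gY F F3).
move: (gX F) (gY F) => X Y X13 Y3 XY X1 Y1 slXe slYe.
have homH : ((<[X]> <*> <[Y]>)%G \homg Grp (x : y : (x ^+ 13 = 1, y ^+ 3 = 1, x ^ y = x ^+ 3)))%g.
  apply/existsP; exists (X, Y); rewrite /= X13 Y3 XY.
  exact: eqxx.
have hG : ((<[X]> <*> <[Y]>)%G \homg G)%g by rewrite (hiso _ (<[X]> <*> <[Y]>)%G).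
case/homgP: hG => phi imphi.
have [_ _ c39] := grp_facts X13 Y3 XY.
have cH := c39 X1 Y1.
have cG : (#|G| <= 39)%N.
  have := isoGrp_hom hiso => /existsP[[x y]] /=; rewrite !xpair_eqE /=.
  case/and4P => /eqP defG /eqP x13 /eqP y3 /eqP xy.
  have [_ c _] := grp_facts x13 y3 xy.
  by rewrite -defG.
have injphi : ('injm phi)%g.
  rewrite -card_im_injm eqn_leq leq_morphim /= imphi cH.
  by move: cG; rewrite -cH -imphi.
have [crd [dec [crdD decK crdK]]] := coords_exist F3 cF.
have [ex [lg [exD exnz exK lgK]]] := exp_exist n1 cF.
have PhiInj := Phi_inj F3 X13 Y3 XY X1 Y1 slXe slYe injphi imphi.
have PhiPsi := Phi_Psi F3 X13 Y3 XY X1 Y1 slXe slYe injphi imphi.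
have PhiInB := Phi_inB F3 X13 Y3 XY X1 Y1 slXe slYe injphi imphi.
have PsiSupp := Psi_supp F3 X13 Y3 XY X1 Y1 injphi imphi.
have unitsP : forall a, a \in ga_units F G -> UB (Phi phi a) /\ ga_supp G a.
  move=> a; rewrite inE => /andP[sa /existsP[b /and3P[sb /eqP e1 /eqP e2]]].
  split => //; apply: (UB_of (PhiInB a) (PhiInB b)).
  by rewrite -PhiM e1 Phi1.
exists (fun a => tgt n1 crd lg (Phi phi a)); split.
- move=> a a' /unitsP[ua sa] /unitsP[ua' sa'] e.
  apply: PhiInj => //; exact: (tgt_inj F3 crdK exK ua ua' e).
- move=> t; have [b [ub eb]] := tgt_sur F3 n1 decK exnz lgK t.
  have [ib _ _] := ub.
  exists (Psi X Y injphi b); last by rewrite PhiPsi.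
  have [b' [ib' e1 e2]] := UB_inv ub.
  rewrite inE PsiSupp /=; apply/existsP; exists (Psi X Y injphi b').
  rewrite PsiSupp /=; apply/andP; split; apply/eqP; apply: PhiInj;
    rewrite ?ga_mul_supp ?ga_one_supp ?PsiSupp //;
    by rewrite PhiM Phi1 !PhiPsi.
- move=> a b /unitsP[ua _] /unitsP[ub _].
  by rewrite PhiM (tgtM F3 n1 crdD exD exK lgK ua ub).
Qed.
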